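(* Let $(X,\Delta,\varepsilon,T)$ be a TSD object over a field $\mathbb k$, let $R=\mathbb k[[\hbar]]/(\hbar^2)$ and $X_\hbar=X\otimes_{\mathbb k}R$ with $\Delta$, $\Delta_3$ extended $R$-linearly. For a $\mathbb k$-linear $\psi\colon X^{\otimes 3}\to X$ let $T_\psi=T+\hbar\psi$ (extended $R$-linearly). Then: (1) $T_\psi$ is an infinitesimal deformation of $T$ if and only if $\psi\in Z^2_{\rm TSD}(X;X)$; (2) for $\psi,\psi'\in Z^2_{\rm TSD}(X;X)$, the deformations $T_\psi$ and $T_{\psi'}$ are equivalent if and only if $\psi-\psi'\in B^2_{\rm TSD}(X;X)$. Consequently, equivalence classes of infinitesimal deformations of $T$ are in bijection with $H^2_{\rm TSD}(X;X)$.
   Context: A TSD object is a $\mathbb k$-module $X$ with a coassociative counital comultiplication $\Delta$, counit $\varepsilon$, $\Delta_3=(\Delta\otimes\mathbb 1)\Delta$ (Sweedler notation $\Delta_3(w)=w^{(1)}\otimes w^{(2)}\otimes w^{(3)}$), and a linear $T\colon X^{\otimes 3}\to X$ with (i) $\Delta_3T=T^{\otimes 3}\sigma\Delta_3^{\otimes 3}$, where $\sigma$ sends $u_1\otimes\cdots\otimes u_9$ to $u_1\otimes u_4\otimes u_7\otimes u_2\otimes u_5\otimes u_8\otimes u_3\otimes u_6\otimes u_9$, and (ii) $T(T(x\otimes y\otimes z)\otimes w\otimes u)=T(T(x\otimes w^{(1)}\otimes u^{(1)})\otimes T(y\otimes w^{(2)}\otimes u^{(2)})\otimes T(z\otimes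 w^{(3)}\otimes u^{(3)}))$. An infinitesimal deformation of $T$ is an $R$-linear $T'\colon X_\hbar^{\otimes 3}\to X_\hbar$ with $T'\equiv T$ mod $\hbar$ such that $(X_\hbar,\Delta,T')$ satisfies (i) and (ii). Two deformations $T',T''$ are equivalent if there is an $R$-linear $g\colon X_\hbar\to X_\hbar$ with $g\equiv\mathbb 1$ mod $\hbar$, $\Delta_3 g=g^{\otimes 3}\Delta_3$ and $g\circ T'=T''\circ g^{\otimes 3}$. TSD cohomology: $C^1_{\rm TSD}(X;X)$ = ternary coderivations $f$ (i.e. $\Delta_3 f=(f\otimes\mathbb 1\otimes\mathbb 1+\mathbb 1\otimes f\otimes\mathbb 1+\mathbb 1\otimes\mathbb 1\otimes f)\Delta_3$); $C^2_{\rm TSD}(X;X)$ = linear $\psi\colon X^{\otimes 3}\to X$ with $\Delta_3\psi=(\psi\otimes T\otimes T+T\otimes\psi\otimes T+T\otimes T\otimes\psi)\sigma\Delta_3^{\otimes 3}$; $\delta^1 f(x\otimes y\otimes z)=f(T(x\otimes y\otimes z))-T(f(x)\otimes y\otimes z)-T(x\otimes f(y)\otimes z)-T(x\otimes y\otimes f(z))$; $\delta^2\psi(x\otimes y\otimes z\otimes w\otimes u)=T(\psi(x\otimes y\otimes z)\otimes w\otimes u)+\psi(T(x\otimes y\otimes z)\otimes w\otimes u)-\psi(A_1\otimes A_2\otimes A_3)-T(\Psi_1\otimes A_2\otimes A_3)-T(A_1\otimes\Psi_2\otimes A_3)-T(A_1\otimes A_2\otimes\Psi_3)$ with $A_i=T(x_i\otimes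 w^{(i)}\otimes u^{(i)})$, $(x_1,x_2,x_3)=(x,y,z)$, and $\Psi_i$ the same with $\psi$ in place of $T$. $Z^2_{\rm TSD}=C^2_{\rm TSD}\cap\ker\delta^2$, $B^2_{\rm TSD}=\delta^1(C^1_{\rm TSD})$, $H^2_{\rm TSD}=Z^2_{\rm TSD}/B^2_{\rm TSD}$. *)

(* Defs.v *)
From HB Require Import structures.
From mathcomp Require Import all_boot all_algebra.
From mathcomp Require Import finmap.
From mathcomp.multinomials Require Import monalg.
Set Implicit Arguments. Unset Strict Implicit. Unset Printing Implicit Defensive.
Import GRing.Theory.
Local Open Scope ring_scope.

(* Dual numbers  R = k[[hbar]]/(hbar^2) = { a + hbar b }.                   *)
Section Dual.
Variable K : fieldType.
Record dual := Dual { dfst : K; dsnd : K }.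
Definition dual_to (x : dual) := (dfst x, dsnd x).
Definition dual_of (p : K * K) := Dual p.1 p.2.
Lemma dual_toK : cancel dual_to dual_of. Proof. by case. Qed.
HB.instance Definition _ := Choice.copy dual (can_type dual_toK).

Definition dzero := Dual 0 0.
Definition dopp x := Dual (- dfst x) (- dsnd x).
Definition dadd x y := Dual (dfst x + dfst y) (dsnd x + dsnd y).
Definition done := Dual 1 0.
Definition dmul x y := Dual (dfst x * dfst y) (dfst x * dsnd y + dsnd x * dfst y).

Lemma daddA : associative dadd.
Proof. by move=> [a b] [c d] [e f]; rewrite /dadd /= !addrA. Qed.
Lemma daddC : commutative dadd.
Proof. by move=> [a b] [c d]; rewrite /dadd /= (addrC a) (addrC b). Qed.
Lemma dadd0 : left_id dzero dadd.
Proof. by move=> [a b]; rewrite /dadd /= !add0r. Qed.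
Lemma daddN : left_inverse dzero dopp dadd.
Proof. by move=> [a b]; rewrite /dadd /= !addNr. Qed.
HB.instance Definition _ := GRing.isZmodule.Build dual daddA daddC dadd0 daddN.

Lemma dmulA : associative dmul.
Proof.
move=> [a b] [c d] [e f]; rewrite /dmul /=; congr Dual.
  by rewrite mulrA.
by rewrite !mulrDr !mulrDl !mulrA addrA.
Qed.
Lemma dmulC : commutative dmul.
Proof.
by move=> [a b] [c d]; rewrite /dmul /= (mulrC a) addrC (mulrC a) (mulrC b).
Qed.
Lemma dmul1 : left_id done dmul.
Proof. by move=> [a b]; rewrite /dmul /= !mul1r mul0r addr0. Qed.
Lemma dmulDl : left_distributive dmul dadd.
Proof.
move=> [a b] [c d] [e f]; rewrite /dmul /dadd /=; congr Dual.
  by rewrite mulrDl.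
by rewrite !mulrDl addrACA.
Qed.
Lemma done_neq0 : done != dzero.
Proof. by apply/negP => /eqP [] /eqP; rewrite oner_eq0. Qed.
HB.instance Definition _ :=
  GRing.Zmodule_isComNzRing.Build dual dmulA dmulC dmul1 dmulDl done_neq0.

Definition dembed (c : K) : dual := Dual c 0.
Definition hbar : dual := Dual 0 1.
End Dual.

(* A free S-module with basis I is {malg S[I]}; the tensor power of such     *)
(* modules over S is the free module on the product of the bases.  An       *)
(* S-linear map  S[J] -> S[I]  is (uniquely) given by f : J -> {malg S[I]}.  *)
Section Free.
Variable S : comNzRingType.

Definition lext (I J : choiceType) (f : J -> {malg S[I]}) (v : {malg S[J]})
  : {malg S[I]} := \sum_(j <- msupp v) v@_j *: f j.

Definition comp (I J L : choiceType) (f : J -> {malg S[I]}) (g : L -> {malg S[J]})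
  : L -> {malg S[I]} := fun l => lext f (g l).

Definition idm (I : choiceType) : I -> {malg S[I]} := fun i => << i >>.

Definition tens2 (I J : choiceType) (u : {malg S[I]}) (v : {malg S[J]})
  : {malg S[(I * J)%type]} :=
  \sum_(i <- msupp u) \sum_(j <- msupp v) << u@_i * v@_j *g (i, j) >>.
Definition tens3 (I J L : choiceType) (u : {malg S[I]}) (v : {malg S[J]})
  (w : {malg S[L]}) : {malg S[(I * J * L)%type]} :=
  \sum_(i <- msupp u) \sum_(j <- msupp v) \sum_(l <- msupp w)
     << u@_i * v@_j * w@_l *g (i, j, l) >>.

Definition mtens2 (I I' J J' : choiceType) (f : I -> {malg S[I']})
  (g : J -> {malg S[J']}) : I * J -> {malg S[(I' * J')%type]} :=
  fun x => tens2 (f x.1) (g x.2).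
Definition mtens3 (I I' J J' L L' : choiceType) (f : I -> {malg S[I']})
  (g : J -> {malg S[J']}) (h : L -> {malg S[L']})
  : I * J * L -> {malg S[(I' * J' * L')%type]} :=
  fun x => tens3 (f x.1.1) (g x.1.2) (h x.2).

Definition addm (I J : choiceType) (f g : J -> {malg S[I]}) : J -> {malg S[I]} :=
  fun x => f x + g x.
Definition subm (I J : choiceType) (f g : J -> {malg S[I]}) : J -> {malg S[I]} :=
  fun x => f x - g x.

Definition assocm (I : choiceType) : I * (I * I) -> {malg S[(I * I * I)%type]} :=
  fun x => << (x.1, x.2.1, x.2.2) >>.

Definition sigma (I : choiceType)
  : (I * I * I) * (I * I * I) * (I * I * I)
      -> {malg S[((I * I * I) * (I * I * I) * (I * I * I))%type]} :=
  fun p =>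
    let: (x, y, z) := p in
    << ((x.1.1, y.1.1, z.1.1), (x.1.2, y.1.2, z.1.2), (x.2, y.2, z.2)) >>.

Variable I : choiceType.
Implicit Types (D : I -> {malg S[(I * I)%type]}) (eps : I -> S)
  (T : I * I * I -> {malg S[I]}).

Definition coassociative D :=
  comp (mtens2 D (@idm I)) D =1 comp (@assocm I) (comp (mtens2 (@idm I) D) D).

(* (eps (x) 1) Delta = 1 = (1 (x) eps) Delta, using k (x) X = X = X (x) k *)
Definition counital D eps :=
  comp (fun x : I * I => eps x.1 *: << x.2 >>) D =1 @idm I /\
  comp (fun x : I * I => eps x.2 *: << x.1 >>) D =1 @idm I.

Definition Delta3 D : I -> {malg S[(I * I * I)%type]} := comp (mtens2 D (@idm I)) D.

Definition TSD_cond_i D T :=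
  comp (Delta3 D) T =1
  comp (mtens3 T T T) (comp (@sigma I) (mtens3 (Delta3 D) (Delta3 D) (Delta3 D))).

(* Sweedler expression  G( sum F1(x (x) w1 (x) u1) (x) F2(y (x) w2 (x) u2)
                                  (x) F3(z (x) w3 (x) u3) ),
   as a linear map on X^{(x)5} (basis I*I*I*I*I, points (x,y,z,w,u)). *)
Definition sweedler D (G F1 F2 F3 : I * I * I -> {malg S[I]})
  : I * I * I * I * I -> {malg S[I]} :=
  fun p =>
    let: (x, y, z, w, u) := p in
    lext G (lext (fun q : (I * I * I) * (I * I * I) =>
                    tens3 (F1 (x, q.1.1.1, q.2.1.1))
                          (F2 (y, q.1.1.2, q.2.1.2))
                          (F3 (z, q.1.2, q.2.2)))
                 (tens2 (Delta3 D w) (Delta3 D u))).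

Definition first_slot (G F : I * I * I -> {malg S[I]})
  : I * I * I * I * I -> {malg S[I]} :=
  fun p => let: (x, y, z, w, u) := p in
           lext G (tens3 (F (x, y, z)) << w >> << u >>).

Definition TSD_cond_ii D T := first_slot T T =1 sweedler D T T T T.

Definition is_TSD D eps T :=
  [/\ coassociative D, counital D eps, TSD_cond_i D T & TSD_cond_ii D T].

Definition coderivation D (f : I -> {malg S[I]}) :=
  comp (Delta3 D) f =1
  comp (addm (addm (mtens3 f (@idm I) (@idm I)) (mtens3 (@idm I) f (@idm I)))
             (mtens3 (@idm I) (@idm I) f)) (Delta3 D).

Definition C2 D T (psi : I * I * I -> {malg S[I]}) :=
  comp (Delta3 D) psi =1
  comp (addm (addm (mtens3 psi T T) (mtens3 T psi T)) (mtens3 T T psi))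
       (comp (@sigma I) (mtens3 (Delta3 D) (Delta3 D) (Delta3 D))).

Definition delta1 T (f : I -> {malg S[I]}) : I * I * I -> {malg S[I]} :=
  fun p => let: (x, y, z) := p in
    lext f (T (x, y, z))
    - lext T (tens3 (f x) << y >> << z >>)
    - lext T (tens3 << x >> (f y) << z >>)
    - lext T (tens3 << x >> << y >> (f z)).

Definition delta2 D T (psi : I * I * I -> {malg S[I]})
  : I * I * I * I * I -> {malg S[I]} :=
  fun p =>
    first_slot T psi p + first_slot psi T p
    - sweedler D psi T T T p
    - sweedler D T psi T T p
    - sweedler D T T psi T p
    - sweedler D T T T psi p.

Definition Z2 D T (psi : I * I * I -> {malg S[I]}) :=
  C2 D T psi /\ delta2 D T psi =1 (fun _ => 0).

Definition B2 D T (phi : I * I * I -> {malg S[I]}) :=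
  exists2 f, coderivation D f & delta1 T f =1 phi.

End Free.

(* X_hbar = X (x)_k R is the free R-module on the same basis I, and          *)
(* X_hbar^{(x)_R 3} the free R-module on I*I*I.                               *)
Section Deform.
Variables (K : fieldType) (I : choiceType).
Local Notation R := (dual K).

Definition cmap (S S' : comNzRingType) (J : choiceType) (phi : S -> S')
  (v : {malg S[J]}) : {malg S'[J]} :=
  \sum_(j <- msupp v) << phi v@_j *g j >>.

Definition liftm (J : choiceType) (f : J -> {malg K[I]}) : J -> {malg R[I]} :=
  fun j => cmap (@dembed K) (f j).
Definition liftm2 (f : I -> {malg K[(I * I)%type]}) : I -> {malg R[(I * I)%type]} :=
  fun j => cmap (@dembed K) (f j).

Definition modh (J : choiceType) (f : J -> {malg R[I]}) : J -> {malg K[I]} :=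
  fun j => cmap (@dfst K) (f j).

Variables (D : I -> {malg K[(I * I)%type]}) (T : I * I * I -> {malg K[I]}).

Definition Tpsi (psi : I * I * I -> {malg K[I]}) : I * I * I -> {malg R[I]} :=
  fun x => liftm T x + hbar K *: liftm psi x.

Definition inf_deformation (T' : I * I * I -> {malg R[I]}) :=
  [/\ modh T' =1 T, TSD_cond_i (liftm2 D) T' & TSD_cond_ii (liftm2 D) T'].

Definition equiv_deformations (T' T'' : I * I * I -> {malg R[I]}) :=
  exists g : I -> {malg R[I]},
    [/\ modh g =1 @idm K I,
        comp (Delta3 (liftm2 D)) g =1 comp (mtens3 g g g) (Delta3 (liftm2 D))
      & comp g T' =1 comp T'' (mtens3 g g g)].
End Deform.

(* Main.v *)
Require Import Defs.
From HB Require Import structures.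
From mathcomp Require Import all_boot all_algebra.
From mathcomp Require Import finmap.
From mathcomp.multinomials Require Import monalg.
From Stdlib Require Import FunctionalExtensionality PropExtensionality.
Import GRing.Theory.
Local Open Scope ring_scope.

Set Implicit Arguments. Unset Strict Implicit. Unset Printing Implicit Defensive.


Section Gen.
Variable S : comNzRingType.

Lemma lextEw (I J : choiceType) (f : J -> {malg S[I]}) (v : {malg S[J]}) (d : {fset J}) :
  (msupp v `<=` d)%fset -> lext f v = \sum_(j <- d) v@_j *: f j.
Proof.
move=> sub; rewrite /lext; apply: big_fset_incl => // j _ jn.
by rewrite mcoeff_outdom // scale0r.
Qed.

Lemma lextD (I J : choiceType) (f : J -> {malg S[I]}) v w :
  lext f (v + w) = lext f v + lext f w.
Proof.
rewrite (@lextEw _ _ f (v + w) (msupp v `|` msupp w)%fset) ?msuppD_le //.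
rewrite (@lextEw _ _ f v (msupp v `|` msupp w)%fset) ?fsubsetUl //.
rewrite (@lextEw _ _ f w (msupp v `|` msupp w)%fset) ?fsubsetUr //.
rewrite -big_split /=; apply: eq_bigr => j _; by rewrite mcoeffD scalerDl.
Qed.

Lemma lextZ (I J : choiceType) (f : J -> {malg S[I]}) c v :
  lext f (c *: v) = c *: lext f v.
Proof.
rewrite (@lextEw _ _ f (c *: v) (msupp v)) ?msuppZ_le // /lext scaler_sumr.
by apply: eq_bigr => j _; rewrite mcoeffZ scalerA.
Qed.

Lemma lext0 (I J : choiceType) (f : J -> {malg S[I]}) : lext f 0 = 0.
Proof. by rewrite /lext msupp0 big_seq_fset0. Qed.

Lemma lextN (I J : choiceType) (f : J -> {malg S[I]}) v : lext f (- v) = - lext f v.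
Proof. by rewrite -scaleN1r lextZ scaleN1r. Qed.

Lemma lext_sum (I J : choiceType) (f : J -> {malg S[I]}) (T : Type) (r : seq T) (F : T -> _) :
  lext f (\sum_(t <- r) F t) = \sum_(t <- r) lext f (F t).
Proof.
elim: r => [|a r IH]; first by rewrite !big_nil lext0.
by rewrite !big_cons lextD IH.
Qed.

Lemma lextU (I J : choiceType) (f : J -> {malg S[I]}) c j :
  lext f << c *g j >> = c *: f j.
Proof.
rewrite (@lextEw _ _ f _ [fset j]%fset) ?msuppU_le // big_seq_fset1 mcoeffUU //.
Qed.

Lemma lext_addf (I J : choiceType) (f g : J -> {malg S[I]}) v :
  lext (fun j => f j + g j) v = lext f v + lext g v.
Proof. by rewrite /lext -big_split; apply: eq_bigr => j _; rewrite scalerDr. Qed.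

Lemma lext_oppf (I J : choiceType) (f : J -> {malg S[I]}) v :
  lext (fun j => - f j) v = - lext f v.
Proof. by rewrite /lext -sumrN; apply: eq_bigr => j _; rewrite scalerN. Qed.

Lemma lext_0f (I J : choiceType) v :
  lext (fun j : J => (0 : {malg S[I]})) v = 0.
Proof. by rewrite /lext big1 // => j _; rewrite scaler0. Qed.

Lemma lext_ext (I J : choiceType) (f g : J -> {malg S[I]}) v :
  (forall j, f j = g j) -> lext f v = lext g v.
Proof. by move=> e; rewrite /lext; apply: eq_bigr => j _; rewrite e. Qed.

Lemma malgUZ (I : choiceType) (c : S) (i : I) : << c *g i >> = c *: << i >>.
Proof.
apply/malgP => k; rewrite mcoeffZ !mcoeffU.
by case: (i == k); rewrite ?mulr1 ?mulr0.
Qed.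

Lemma lext_idm (I : choiceType) (v : {malg S[I]}) : lext (@idm S I) v = v.
Proof.
rewrite [RHS]monalgE /lext; apply: eq_bigr => j _; by rewrite malgUZ.
Qed.

Lemma tens2E (I J : choiceType) (u : {malg S[I]}) (v : {malg S[J]}) :
  tens2 u v = lext (fun i => lext (fun j => << (i, j) >>) v) u.
Proof.
rewrite /tens2 /lext; apply: eq_bigr => i _; rewrite scaler_sumr.
by apply: eq_bigr => j _; rewrite malgUZ scalerA.
Qed.

Lemma tens3E (I J L : choiceType) (u : {malg S[I]}) (v : {malg S[J]}) (w : {malg S[L]}) :
  tens3 u v w = lext (fun i => lext (fun j => lext (fun l => << (i, j, l) >>) w) v) u.
Proof.
rewrite /tens3 /lext; apply: eq_bigr => i _; rewrite scaler_sumr.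
apply: eq_bigr => j _; rewrite scaler_sumr.
by rewrite scaler_sumr; apply: eq_bigr => l _; rewrite malgUZ !scalerA.
Qed.

Lemma tens2_0l (I J : choiceType) (v : {malg S[J]}) : tens2 (0 : {malg S[I]}) v = 0.
Proof. by rewrite /tens2 msupp0 big_seq_fset0. Qed.
Lemma tens2_0r (I J : choiceType) (u : {malg S[I]}) : tens2 u (0 : {malg S[J]}) = 0.
Proof. by rewrite /tens2 big1 // => i _; rewrite msupp0 big_seq_fset0. Qed.
Lemma tens3_0l (I J L : choiceType) (v : {malg S[J]}) (w : {malg S[L]}) :
  tens3 (0 : {malg S[I]}) v w = 0.
Proof. by rewrite /tens3 msupp0 big_seq_fset0. Qed.
Lemma tens3_0m (I J L : choiceType) (u : {malg S[I]}) (w : {malg S[L]}) :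
  tens3 u (0 : {malg S[J]}) w = 0.
Proof. by rewrite /tens3 big1 // => i _; rewrite msupp0 big_seq_fset0. Qed.
Lemma tens3_0r (I J L : choiceType) (u : {malg S[I]}) (v : {malg S[J]}) :
  tens3 u v (0 : {malg S[L]}) = 0.
Proof.
rewrite /tens3 big1 // => i _; rewrite big1 // => j _.
by rewrite msupp0 big_seq_fset0.
Qed.

Lemma tens3N1 (I J L : choiceType) (u : {malg S[I]}) (v : {malg S[J]}) (w : {malg S[L]}) :
  tens3 (- u) v w = - tens3 u v w.
Proof. by rewrite !tens3E lextN. Qed.
Lemma tens3N2 (I J L : choiceType) (u : {malg S[I]}) (v : {malg S[J]}) (w : {malg S[L]}) :
  tens3 u (- v) w = - tens3 u v w.
Proof.
rewrite !tens3E -lext_oppf; apply: lext_ext => i; by rewrite lextN.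
Qed.
Lemma tens3N3 (I J L : choiceType) (u : {malg S[I]}) (v : {malg S[J]}) (w : {malg S[L]}) :
  tens3 u v (- w) = - tens3 u v w.
Proof.
rewrite !tens3E -lext_oppf; apply: lext_ext => i.
rewrite -lext_oppf; apply: lext_ext => j; by rewrite lextN.
Qed.

Lemma sum_delta (J : choiceType) (G : zmodType) (s : {fset J}) (F : J -> G) k :
  (k \notin s -> F k = 0) -> \sum_(j <- s) F j *+ (j == k) = F k.
Proof.
move=> h; case: (boolP (k \in s)) => ks.
  rewrite (big_fsetD1 k) //= eqxx mulr1n big1_fset ?addr0 // => j.
  by rewrite in_fsetD1 => /andP [/negbTE -> _]; rewrite mulr0n.
rewrite h // big1_fset // => j js _; case: eqP => [e|]; last by rewrite mulr0n.
by move: ks; rewrite -e js.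
Qed.

Lemma mcoeff_cmap (S' : comNzRingType) (J : choiceType) (phi : S -> S') (v : {malg S[J]}) k :
  phi 0 = 0 -> (cmap phi v)@_k = phi v@_k.
Proof.
move=> p0; rewrite /cmap raddf_sum /=.
rewrite (eq_bigr (fun j => phi v@_j *+ (j == k))); last by move=> j _; rewrite mcoeffU.
by apply: sum_delta => kn; rewrite mcoeff_outdom.
Qed.

End Gen.

Section DualL.
Variable K : fieldType.
Local Notation R := (dual K).

Lemma dual_eqP (x y : R) : dfst x = dfst y -> dsnd x = dsnd y -> x = y.
Proof. by case: x => a b; case: y => c d /= -> ->. Qed.
Lemma dfstD (x y : R) : dfst (x + y) = dfst x + dfst y. Proof. by []. Qed.
Lemma dsndD (x y : R) : dsnd (x + y) = dsnd x + dsnd y. Proof. by []. Qed.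
Lemma dfstM (x y : R) : dfst (x * y) = dfst x * dfst y. Proof. by []. Qed.
Lemma dsndM (x y : R) : dsnd (x * y) = dfst x * dsnd y + dsnd x * dfst y. Proof. by []. Qed.
Lemma dfst0 : dfst (0 : R) = 0. Proof. by []. Qed.
Lemma dsnd0 : dsnd (0 : R) = 0. Proof. by []. Qed.

Fact Lm_key : unit. Proof. exact: tt. Qed.
Definition Lm (J : choiceType) (a b : {malg K[J]}) : {malg R[J]} :=
  locked_with Lm_key (cmap (@dembed K) a + hbar K *: cmap (@dembed K) b).
Lemma LmE (J : choiceType) (a b : {malg K[J]}) :
  Lm a b = cmap (@dembed K) a + hbar K *: cmap (@dembed K) b.
Proof. by rewrite /Lm unlock. Qed.

Lemma Lcoef (J : choiceType) (a b : {malg K[J]}) j : (Lm a b)@_j = Dual a@_j b@_j.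
Proof.
rewrite LmE mcoeffD mcoeffZ !mcoeff_cmap //.
apply: dual_eqP; rewrite /= ?mul0r ?mul1r ?mulr0 ?add0r ?addr0 //.
Qed.

Lemma Lm_eq (J : choiceType) (a b c d : {malg K[J]}) :
  Lm a b = Lm c d <-> a = c /\ b = d.
Proof.
split => [e|[-> ->] //]; split; apply/malgP => j; move/malgP: e => /(_ j);
  rewrite [LHS]Lcoef [RHS]Lcoef; by case.
Qed.

Lemma LmD (J : choiceType) (a b c d : {malg K[J]}) : Lm a b + Lm c d = Lm (a + c) (b + d).
Proof.
apply/malgP => j; rewrite mcoeffD [X in X + _]Lcoef [X in _ + X]Lcoef [RHS]Lcoef.
by rewrite !mcoeffD; apply: dual_eqP.
Qed.

Lemma LmN (J : choiceType) (a b : {malg K[J]}) : - Lm a b = Lm (- a) (- b).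
Proof.
apply/malgP => j; rewrite mcoeffN [X in - X]Lcoef [RHS]Lcoef.
by rewrite !mcoeffN; apply: dual_eqP.
Qed.

Lemma Lm0 (J : choiceType) : Lm (J:=J) 0 0 = 0 :> {malg R[J]}.
Proof. apply/malgP => j; rewrite Lcoef mcoeff0 [RHS]mcoeff0; exact: dual_eqP. Qed.

Lemma LmZ (J : choiceType) c (a b : {malg K[J]}) :
  Dual c 0 *: Lm a b = Lm (c *: a) (c *: b).
Proof.
apply/malgP => j; rewrite mcoeffZ [X in _ * X]Lcoef [RHS]Lcoef !mcoeffZ.
by apply: dual_eqP; rewrite /= ?mul0r ?addr0.
Qed.

Lemma LmH (J : choiceType) (a b : {malg K[J]}) : hbar K *: Lm a b = Lm 0 a.
Proof.
apply/malgP => j; rewrite mcoeffZ [X in _ * X]Lcoef [RHS]Lcoef mcoeff0.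
apply: dual_eqP => /=; [exact: mul0r | by rewrite mul0r mul1r add0r].
Qed.

Lemma Lm_sum (J : choiceType) (T : Type) (r : seq T) (F G : T -> {malg K[J]}) :
  \sum_(t <- r) Lm (F t) (G t) = Lm (\sum_(t <- r) F t) (\sum_(t <- r) G t).
Proof.
elim: r => [|x r IH]. rewrite !big_nil. by rewrite Lm0.
rewrite big_cons [X in _ + X]IH LmD.
rewrite big_cons big_cons. reflexivity.
Qed.

Lemma LmU (J : choiceType) (j : J) : << j >> = Lm (<< j >> : {malg K[J]}) 0.
Proof.
apply/malgP => k; rewrite [RHS]Lcoef mcoeffU [X in _ = Dual X _]mcoeffU mcoeff0.
by case: (j == k); apply: dual_eqP.
Qed.

Lemma Lm_decomp (J : choiceType) (v : {malg R[J]}) :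
  v = Lm (cmap (@dfst K) v) (cmap (@dsnd K) v).
Proof.
apply/malgP => k; rewrite [RHS]Lcoef mcoeff_cmap // mcoeff_cmap //; by case: (v@_k).
Qed.

Lemma cmap_Lm0 (J : choiceType) (a b : {malg K[J]}) : cmap (@dfst K) (Lm a b) = a.
Proof. by apply/malgP => k; rewrite mcoeff_cmap // Lcoef. Qed.
Lemma cmap_Lm1 (J : choiceType) (a b : {malg K[J]}) : cmap (@dsnd K) (Lm a b) = b.
Proof. by apply/malgP => k; rewrite mcoeff_cmap // Lcoef. Qed.

Lemma cmap0 (S S' : comNzRingType) (J : choiceType) (phi : S -> S') :
  cmap phi (0 : {malg S[J]}) = 0.
Proof. by rewrite /cmap msupp0 big_seq_fset0. Qed.

Lemma Lm_v0 (J : choiceType) (a : {malg K[J]}) : Lm a 0 = cmap (@dembed K) a.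
Proof. by rewrite LmE cmap0 scaler0 addr0. Qed.
End DualL.

Section DualL2.
Variable K : fieldType.
Local Notation R := (dual K).
Lemma lext_Lm0 (I J : choiceType) (f0 f1 : J -> {malg K[I]}) (v : {malg K[J]}) :
  lext (fun j => Lm (f0 j) (f1 j)) (Lm v 0) = Lm (lext f0 v) (lext f1 v).
Proof.
rewrite [X in lext _ X]Lm_v0 /cmap lext_sum.
rewrite (_ : lext f0 v = \sum_(j <- msupp v) v@_j *: f0 j) //.
rewrite (_ : lext f1 v = \sum_(j <- msupp v) v@_j *: f1 j) //.
rewrite -Lm_sum.
apply: eq_bigr => j _; rewrite lextU; exact: LmZ.
Qed.

Lemma lext_Lm (I J : choiceType) (f0 f1 : J -> {malg K[I]}) (v0 v1 : {malg K[J]}) :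
  lext (fun j => Lm (f0 j) (f1 j)) (Lm v0 v1) = Lm (lext f0 v0) (lext f1 v0 + lext f0 v1).
Proof.
have -> : Lm v0 v1 = Lm v0 0 + hbar K *: Lm v1 0.
  rewrite LmH LmD addr0 add0r. reflexivity.
rewrite lextD lextZ lext_Lm0 lext_Lm0 LmH LmD addr0. reflexivity.
Qed.

Lemma tens2L (I J : choiceType) (u0 u1 : {malg K[I]}) (v0 v1 : {malg K[J]}) :
  tens2 (Lm u0 u1) (Lm v0 v1) = Lm (tens2 u0 v0) (tens2 u0 v1 + tens2 u1 v0).
Proof.
rewrite [LHS]tens2E.
rewrite (@lext_ext _ _ _ _ (fun i => Lm (lext (fun j => <<(i,j)>>) v0) (lext (fun j => <<(i,j)>>) v1))); last first.
  move=> i. rewrite (@lext_ext _ _ _ _ (fun j => Lm <<(i,j)>> 0)); last by move=> j; exact: LmU.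
  rewrite lext_Lm lext_0f add0r. reflexivity.
rewrite lext_Lm (tens2E u0 v0) (tens2E u0 v1) (tens2E u1 v0) addrC. reflexivity.
Qed.

Lemma tens3L (I J L : choiceType) (u0 u1 : {malg K[I]}) (v0 v1 : {malg K[J]}) (w0 w1 : {malg K[L]}) :
  tens3 (Lm u0 u1) (Lm v0 v1) (Lm w0 w1) =
  Lm (tens3 u0 v0 w0) (tens3 u0 v0 w1 + tens3 u0 v1 w0 + tens3 u1 v0 w0).
Proof.
rewrite [LHS]tens3E.
pose C i j := fun l : L => (<< (i, j, l) >> : {malg K[(I * J * L)%type]}).
pose B0 i j := lext (C i j) w0. pose B1 i j := lext (C i j) w1.
pose A0 i := lext (B0 i) v0. pose A1 i := lext (B1 i) v0 + lext (B0 i) v1.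
rewrite (@lext_ext _ _ _ _ (fun i => Lm (A0 i) (A1 i))); last first.
  move=> i. rewrite (@lext_ext _ _ _ _ (fun j => Lm (B0 i j) (B1 i j))); last first.
    move=> j. rewrite (@lext_ext _ _ _ _ (fun l => Lm (C i j l) 0)); last by move=> l; exact: LmU.
    rewrite lext_Lm lext_0f add0r. reflexivity.
  rewrite lext_Lm. reflexivity.
rewrite lext_Lm /A1 lext_addf (tens3E u0 v0 w0) (tens3E u0 v0 w1) (tens3E u0 v1 w0) (tens3E u1 v0 w0).
reflexivity.
Qed.

Definition Lf (J L : choiceType) (f0 f1 : L -> {malg K[J]}) : L -> {malg R[J]} :=
  fun x => Lm (f0 x) (f1 x).
Definition zf (S : comNzRingType) (J L : choiceType) : L -> {malg S[J]} := fun _ => 0.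
Arguments zf {S J L}.

Lemma LfE (J L : choiceType) (f0 f1 : L -> {malg K[J]}) x : Lf f0 f1 x = Lm (f0 x) (f1 x).
Proof. reflexivity. Qed.

Lemma Lf_eq (J L : choiceType) (a b c d : L -> {malg K[J]}) :
  Lf a b = Lf c d <-> a = c /\ b = d.
Proof.
split => [e|[-> ->] //]; split; apply: functional_extensionality => x;
  have := f_equal (fun f => f x) e; rewrite /= !LfE => /Lm_eq; by case.
Qed.

Lemma compL (I J L : choiceType) (f0 f1 : J -> {malg K[I]}) (g0 g1 : L -> {malg K[J]}) :
  Defs.comp (Lf f0 f1) (Lf g0 g1) = Lf (Defs.comp f0 g0) (addm (Defs.comp f1 g0) (Defs.comp f0 g1)).
Proof. apply: functional_extensionality => l; exact: lext_Lm. Qed.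

Lemma mtens2L (I I' J J' : choiceType) (a0 a1 : I -> {malg K[I']}) (b0 b1 : J -> {malg K[J']}) :
  mtens2 (Lf a0 a1) (Lf b0 b1) = Lf (mtens2 a0 b0) (addm (mtens2 a0 b1) (mtens2 a1 b0)).
Proof. apply: functional_extensionality => x; exact: tens2L. Qed.

Lemma mtens3L (I I' J J' L L' : choiceType) (a0 a1 : I -> {malg K[I']})
  (b0 b1 : J -> {malg K[J']}) (c0 c1 : L -> {malg K[L']}) :
  mtens3 (Lf a0 a1) (Lf b0 b1) (Lf c0 c1) =
  Lf (mtens3 a0 b0 c0) (addm (addm (mtens3 a0 b0 c1) (mtens3 a0 b1 c0)) (mtens3 a1 b0 c0)).
Proof. apply: functional_extensionality => x; exact: tens3L. Qed.

Lemma idmL (J : choiceType) : @idm R J = Lf (@idm K J) zf.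
Proof. apply: functional_extensionality => j; exact: LmU. Qed.

Lemma sigmaL (I : choiceType) : @sigma R I = Lf (@sigma K I) zf.
Proof.
apply: functional_extensionality => [[[x y] z]]; exact: LmU.
Qed.

Lemma liftm2L (I : choiceType) (D : I -> {malg K[(I * I)%type]}) : liftm2 D = Lf D zf.
Proof. apply: functional_extensionality => j; rewrite LfE Lm_v0. reflexivity. Qed.

Lemma TpsiL (I : choiceType) (T psi : I * I * I -> {malg K[I]}) : Tpsi T psi = Lf T psi.
Proof. apply: functional_extensionality => x; rewrite LfE LmE. reflexivity. Qed.
End DualL2.

Arguments zf {S J L}.
Section DualL3.
Variable K : fieldType.
Local Notation R := (dual K).
Lemma zfE (S : comNzRingType) (J L : choiceType) (x : L) : (@zf S J L) x = 0.
Proof. reflexivity. Qed.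

Lemma comp_zr (S : comNzRingType) (I J L : choiceType) (f : J -> {malg S[I]}) :
  Defs.comp f (@zf S J L) = zf.
Proof. apply: functional_extensionality => x; exact: lext0. Qed.

Lemma comp_zl (S : comNzRingType) (I J L : choiceType) (g : L -> {malg S[J]}) :
  Defs.comp (@zf S I J) g = zf.
Proof. apply: functional_extensionality => x; exact: lext_0f. Qed.

Lemma addm_zr (S : comNzRingType) (I J : choiceType) (f : J -> {malg S[I]}) :
  addm f zf = f.
Proof. apply: functional_extensionality => x; exact: addr0. Qed.

Lemma addm_zl (S : comNzRingType) (I J : choiceType) (f : J -> {malg S[I]}) :
  addm zf f = f.
Proof. apply: functional_extensionality => x; exact: add0r. Qed.

Lemma mtens2_zl (S : comNzRingType) (I I' J J' : choiceType) (g : J -> {malg S[J']}) :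
  mtens2 (@zf S I' I) g = zf.
Proof. apply: functional_extensionality => x; exact: tens2_0l. Qed.

Lemma mtens2_zr (S : comNzRingType) (I I' J J' : choiceType) (f : I -> {malg S[I']}) :
  mtens2 f (@zf S J' J) = zf.
Proof. apply: functional_extensionality => x; exact: tens2_0r. Qed.

Lemma mtens3_z1 (S : comNzRingType) (I I' J J' L L' : choiceType)
  (g : J -> {malg S[J']}) (h : L -> {malg S[L']}) :
  mtens3 (@zf S I' I) g h = zf.
Proof. apply: functional_extensionality => x; exact: tens3_0l. Qed.
Lemma mtens3_z2 (S : comNzRingType) (I I' J J' L L' : choiceType)
  (f : I -> {malg S[I']}) (h : L -> {malg S[L']}) :
  mtens3 f (@zf S J' J) h = zf.
Proof. apply: functional_extensionality => x; exact: tens3_0m. Qed.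
Lemma mtens3_z3 (S : comNzRingType) (I I' J J' L L' : choiceType)
  (f : I -> {malg S[I']}) (g : J -> {malg S[J']}) :
  mtens3 f g (@zf S L' L) = zf.
Proof. apply: functional_extensionality => x; exact: tens3_0r. Qed.

Lemma comp_idml (S : comNzRingType) (I J : choiceType) (g : J -> {malg S[I]}) :
  Defs.comp (@idm S I) g = g.
Proof. apply: functional_extensionality => x; exact: lext_idm. Qed.

Lemma comp_idmr (S : comNzRingType) (I J : choiceType) (f : J -> {malg S[I]}) :
  Defs.comp f (@idm S J) = f.
Proof. apply: functional_extensionality => x; rewrite /Defs.comp /idm lextU. exact: scale1r. Qed.

Lemma mtens3_idm (S : comNzRingType) (I J L : choiceType) :
  mtens3 (@idm S I) (@idm S J) (@idm S L) = @idm S _.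
Proof.
apply: functional_extensionality => [[[x y] z]].
rewrite /mtens3 /idm /= tens3E lextU scale1r lextU scale1r lextU scale1r. reflexivity.
Qed.

Lemma Delta3L (I : choiceType) (D : I -> {malg K[(I * I)%type]}) :
  Delta3 (Lf D zf) = Lf (Delta3 D) zf.
Proof.
rewrite /Delta3 idmL mtens2L mtens2_zr mtens2_zl addm_zl compL comp_zl comp_zr addm_zl.
reflexivity.
Qed.

Lemma first_slotE (S : comNzRingType) (I : choiceType) (G F : I * I * I -> {malg S[I]}) x y z w u :
  first_slot G F (x, y, z, w, u) = lext G (tens3 (F (x, y, z)) << w >> << u >>).
Proof. reflexivity. Qed.

Lemma lext_Lf (I J : choiceType) (f0 f1 : J -> {malg K[I]}) (v0 v1 : {malg K[J]}) :
  lext (Lf f0 f1) (Lm v0 v1) = Lm (lext f0 v0) (lext f1 v0 + lext f0 v1).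
Proof. exact: lext_Lm. Qed.

Lemma firstL (I : choiceType) (G0 G1 F0 F1 : I * I * I -> {malg K[I]}) :
  first_slot (Lf G0 G1) (Lf F0 F1) =
  Lf (first_slot G0 F0) (addm (first_slot G1 F0) (first_slot G0 F1)).
Proof.
apply: functional_extensionality => [[[[[x y] z] w] u]].
rewrite [LHS]first_slotE LfE (@LmU K _ w) (@LmU K _ u) tens3L tens3_0r tens3_0m add0r add0r lext_Lf.
reflexivity.
Qed.

Lemma sweedlerE (S : comNzRingType) (I : choiceType) (D : I -> {malg S[(I * I)%type]})
  (G F1 F2 F3 : I * I * I -> {malg S[I]}) x y z w u :
  sweedler D G F1 F2 F3 (x, y, z, w, u) =
    lext G (lext (fun q : (I * I * I) * (I * I * I) =>
                    tens3 (F1 (x, q.1.1.1, q.2.1.1))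
                          (F2 (y, q.1.1.2, q.2.1.2))
                          (F3 (z, q.1.2, q.2.2)))
                 (tens2 (Delta3 D w) (Delta3 D u))).
Proof. reflexivity. Qed.

Lemma sweedlerL (I : choiceType) (D : I -> {malg K[(I * I)%type]})
  (G0 G1 A0 A1 B0 B1 C0 C1 : I * I * I -> {malg K[I]}) :
  sweedler (Lf D zf) (Lf G0 G1) (Lf A0 A1) (Lf B0 B1) (Lf C0 C1) =
  Lf (sweedler D G0 A0 B0 C0)
     (addm (addm (addm (sweedler D G1 A0 B0 C0) (sweedler D G0 A0 B0 C1))
                 (sweedler D G0 A0 B1 C0)) (sweedler D G0 A1 B0 C0)).
Proof.
apply: functional_extensionality => [[[[[x y] z] w] u]].
rewrite [LHS]sweedlerE Delta3L LfE LfE zfE tens2L tens2_0r tens2_0l addr0.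
have E : forall q : (I * I * I) * (I * I * I),
  tens3 (Lf A0 A1 (x, q.1.1.1, q.2.1.1)) (Lf B0 B1 (y, q.1.1.2, q.2.1.2))
        (Lf C0 C1 (z, q.1.2, q.2.2)) =
  Lm (tens3 (A0 (x, q.1.1.1, q.2.1.1)) (B0 (y, q.1.1.2, q.2.1.2)) (C0 (z, q.1.2, q.2.2)))
     (tens3 (A0 (x, q.1.1.1, q.2.1.1)) (B0 (y, q.1.1.2, q.2.1.2)) (C1 (z, q.1.2, q.2.2)) +
      tens3 (A0 (x, q.1.1.1, q.2.1.1)) (B1 (y, q.1.1.2, q.2.1.2)) (C0 (z, q.1.2, q.2.2)) +
      tens3 (A1 (x, q.1.1.1, q.2.1.1)) (B0 (y, q.1.1.2, q.2.1.2)) (C0 (z, q.1.2, q.2.2))).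
  by move=> q; exact: tens3L.
rewrite (@lext_ext _ _ _ _ _ _ E) lext_Lm0 lext_Lf lext_addf lext_addf lextD lextD addrA addrA.
reflexivity.
Qed.
End DualL3.

Arguments zf {S J L}.
Section Main.
Variable K : fieldType.
Local Notation R := (dual K).
Lemma zmod1 (V : zmodType) (a b c d e f : V) :
  a + b = c + f + e + d <-> b + a - c - d - e - f = 0.
Proof.
have -> : b + a - c - d - e - f = (a + b) - (c + f + e + d).
  rewrite (addrC b) !opprD !addrA.
  rewrite (addrAC _ (- e) (- f)) (addrAC _ (- d) (- f)) (addrAC _ (- d) (- e)).
  reflexivity.
split => h; first by rewrite h subrr.
exact: subr0_eq h.
Qed.


Lemma zmod2 (V : zmodType) (a b c d e g : V) :
  a + b = c + (d + e + g) <-> - a + g + e + d = b - c.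
Proof.
have -> : (- a + g + e + d = b - c) <-> (- a + g + e + d + c = b).
  by split => h; [rewrite h subrK | rewrite -h addrK].
have -> : (- a + g + e + d + c = b) <-> (a + (- a + g + e + d + c) = a + b).
  by split => h; [rewrite h | exact: (addrI a)].
have -> : a + (- a + g + e + d + c) = c + (d + e + g).
  rewrite [in X in X = _]addrA [in X in X = _]addrA [in X in X = _]addrA [in X in X = _]addrA addrN add0r.
  rewrite [LHS]addrC; congr (_ + _).
  by rewrite addrC [g + e]addrC addrA.
by split => h; rewrite h.
Qed.

Lemma eqfunE (A B : Type) (f g : A -> B) : (f =1 g) = (f = g).
Proof.
apply: propositional_extensionality; split => [h|-> //].
exact: functional_extensionality.
Qed.

Lemma Lf_eqE (J L : choiceType) (a b c d : L -> {malg K[J]}) :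
  (Lf a b = Lf c d) = (a = c /\ b = d).
Proof. apply: propositional_extensionality; exact: Lf_eq. Qed.

Lemma addm_rev (S : comNzRingType) (I J : choiceType) (a b c : J -> {malg S[I]}) :
  addm (addm a b) c = addm (addm c b) a.
Proof.
apply: functional_extensionality => x; rewrite /addm.
by rewrite addrC (addrC (a x)) addrA.
Qed.

Lemma abs1 (a b c : choiceType) (T psi : a -> {malg K[b]}) (De : b -> {malg K[a]})
  (M : a -> {malg K[c]}) (si : c -> {malg K[c]}) (MT M1 : c -> {malg K[a]}) :
  Defs.comp De T = Defs.comp MT (Defs.comp si M) ->
  (Defs.comp (Lf De zf) (Lf T psi) = Defs.comp (Lf MT M1) (Defs.comp (Lf si zf) (Lf M zf))
   <-> Defs.comp De psi = Defs.comp M1 (Defs.comp si M)).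
Proof.
move=> H.
rewrite compL comp_zl addm_zl compL comp_zl comp_zr addm_zl compL comp_zr addm_zr Lf_eqE.
by split => [[]|].
Qed.

Lemma part1i (I : choiceType) (D : I -> {malg K[(I * I)%type]}) (T psi : I * I * I -> {malg K[I]}) :
  TSD_cond_i D T -> (TSD_cond_i (liftm2 D) (Tpsi T psi) <-> C2 D T psi).
Proof.
rewrite /TSD_cond_i /C2 !eqfunE.
rewrite liftm2L TpsiL Delta3L sigmaL.
generalize (Delta3 D) (@sigma K I) => De si.
rewrite mtens3L. rewrite mtens3L. rewrite  mtens3_z3. rewrite mtens3_z2 mtens3_z1. rewrite addm_zl addm_zl.
generalize (mtens3 T T T) (mtens3 De De De) (mtens3 psi T T) (mtens3 T psi T) (mtens3 T T psi) => MT M a1 a2 a3.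
rewrite (addm_rev a1).
exact: abs1.
Qed.

Lemma abs2 (A B : Type) (V : zmodType) (X0 Y0 a b c d e f : A -> V) (L : (A -> V) -> (A -> V) -> (A -> B))
  (Linj : forall p q r s, (L p q = L r s) = (p = r /\ q = s)) :
  X0 = Y0 ->
  (L X0 (fun p => a p + b p) =1 L Y0 (fun p => c p + f p + e p + d p) <->
   (fun p => b p + a p - c p - d p - e p - f p) =1 (fun _ => 0)).
Proof.
move=> H; rewrite eqfunE Linj eqfunE; split => [[_ h]|h].
  apply: functional_extensionality => p; apply/zmod1.
  exact: (f_equal (fun F => F p) h).
split => //; apply: functional_extensionality => p; apply/zmod1.
exact: (f_equal (fun F => F p) h).
Qed.

Lemma part1ii (I : choiceType) (D : I -> {malg K[(I * I)%type]}) (T psi : I * I * I -> {malg K[I]}) :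
  TSD_cond_ii D T -> (TSD_cond_ii (liftm2 D) (Tpsi T psi) <-> delta2 D T psi =1 (fun _ => 0)).
Proof.
rewrite /TSD_cond_ii /delta2 eqfunE => H.
rewrite liftm2L TpsiL firstL sweedlerL.
move: H.
generalize (first_slot T T) (sweedler D T T T T) (first_slot psi T) (first_slot T psi)
  (sweedler D psi T T T) (sweedler D T psi T T) (sweedler D T T psi T) (sweedler D T T T psi)
  => X0 Y0 a b c d e f H.
have h := (@abs2 _ _ _ X0 Y0 a b c d e f (@Lf K I _) (@Lf_eqE I _) H). exact: h.
Qed.

Lemma modh_Lf (I J : choiceType) (f0 f1 : J -> {malg K[I]}) : modh (Lf f0 f1) = f0.
Proof. apply: functional_extensionality => x; exact: cmap_Lm0. Qed.

Lemma abs3 (I J : choiceType) (De : I -> {malg K[J]}) (f : I -> {malg K[I]}) (M1 : J -> {malg K[J]}) :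
  Defs.comp (Lf De zf) (Lf (@idm K I) f) =1 Defs.comp (Lf (@idm K J) M1) (Lf De zf)
  <-> Defs.comp De f =1 Defs.comp M1 De.
Proof.
rewrite !eqfunE compL compL comp_zl addm_zl comp_idmr comp_idml comp_zr addm_zr Lf_eqE.
by split => [[]|].
Qed.

Lemma equiv_cond2 (I : choiceType) (D : I -> {malg K[(I * I)%type]}) (f : I -> {malg K[I]}) :
  Defs.comp (Delta3 (liftm2 D)) (Lf (@idm K I) f) =1
    Defs.comp (mtens3 (Lf (@idm K I) f) (Lf (@idm K I) f) (Lf (@idm K I) f)) (Delta3 (liftm2 D))
  <-> coderivation D f.
Proof.
rewrite /coderivation liftm2L Delta3L.
generalize (Delta3 D) => De.
rewrite mtens3L mtens3_idm.
generalize (mtens3 (@idm K I) (@idm K I) f) (mtens3 (@idm K I) f (@idm K I)) (mtens3 f (@idm K I) (@idm K I)) => a1 a2 a3.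
rewrite (addm_rev a3).
exact: abs3.
Qed.

Lemma abs4 (I J : choiceType) (T psi psi' : J -> {malg K[I]}) (f : I -> {malg K[I]}) (M1 : J -> {malg K[J]}) :
  Defs.comp (Lf (@idm K I) f) (Lf T psi) =1 Defs.comp (Lf T psi') (Lf (@idm K J) M1)
  <-> addm (Defs.comp f T) psi =1 addm psi' (Defs.comp T M1).
Proof.
rewrite !eqfunE compL compL comp_idml comp_idml comp_idmr comp_idmr Lf_eqE.
by split => [[]|].
Qed.

Lemma delta1_opp (I : choiceType) (T : I * I * I -> {malg K[I]}) (f : I -> {malg K[I]}) x y z :
  delta1 T (fun j => - f j) (x, y, z) =
  - lext f (T (x, y, z)) + lext T (tens3 (f x) << y >> << z >>)
  + lext T (tens3 << x >> (f y) << z >>) + lext T (tens3 << x >> << y >> (f z)).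
Proof.
rewrite /delta1.
apply: (f_equal2 (@GRing.add _)); [apply: (f_equal2 (@GRing.add _)); [apply: (f_equal2 (@GRing.add _)) | ] | ].
- exact: lext_oppf.
- apply: (etrans (f_equal (fun v => - v) (etrans (f_equal (lext T) (tens3N1 _ _ _)) (lextN _ _)))).
  exact: opprK.
- apply: (etrans (f_equal (fun v => - v) (etrans (f_equal (lext T) (tens3N2 _ _ _)) (lextN _ _)))).
  exact: opprK.
- apply: (etrans (f_equal (fun v => - v) (etrans (f_equal (lext T) (tens3N3 _ _ _)) (lextN _ _)))).
  exact: opprK.
Qed.

Lemma equiv_cond3 (I : choiceType) (T psi psi' : I * I * I -> {malg K[I]}) (f : I -> {malg K[I]}) :
  Defs.comp (Lf (@idm K I) f) (Lf T psi) =1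
    Defs.comp (Lf T psi') (mtens3 (Lf (@idm K I) f) (Lf (@idm K I) f) (Lf (@idm K I) f))
  <-> delta1 T (fun j => - f j) =1 subm psi psi'.
Proof.
rewrite mtens3L mtens3_idm abs4.
split => h [[x y] z]; have := h (x, y, z); rewrite delta1_opp /subm /addm /Defs.comp /mtens3 /=;
  rewrite lextD lextD; by move/zmod2.
Qed.

Lemma coder_opp (I : choiceType) (D : I -> {malg K[(I * I)%type]}) (f : I -> {malg K[I]}) :
  coderivation D f -> coderivation D (fun j => - f j).
Proof.
rewrite /coderivation; generalize (Delta3 D) => De h j.
have E : addm (addm (mtens3 (fun j => - f j) (@idm K I) (@idm K I))
                    (mtens3 (@idm K I) (fun j => - f j) (@idm K I)))
              (mtens3 (@idm K I) (@idm K I) (fun j => - f j)) =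
         (fun q => - addm (addm (mtens3 f (@idm K I) (@idm K I)) (mtens3 (@idm K I) f (@idm K I)))
                          (mtens3 (@idm K I) (@idm K I) f) q).
  apply: functional_extensionality => [[[a b] c]].
  rewrite /addm /mtens3 /=.
  rewrite tens3N1 tens3N2 tens3N3 opprD opprD. reflexivity.
rewrite E.
have := h j; rewrite /Defs.comp => hj.
rewrite lextN lext_oppf hj. reflexivity.
Qed.
End Main.

Unset Implicit Arguments.

Theorem mainTheorem3 (k : fieldType) (I : choiceType)
  (D : I -> {malg k[(I * I)%type]}) (eps : I -> k) (T : I * I * I -> {malg k[I]}) :
  is_TSD D eps T ->
  [/\ (forall psi : I * I * I -> {malg k[I]},
         inf_deformation D T (Tpsi T psi) <-> Z2 D T psi),
      (forall psi psi' : I * I * I -> {malg k[I]},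
         Z2 D T psi -> Z2 D T psi' ->
         (equiv_deformations D (Tpsi T psi) (Tpsi T psi')
            <-> B2 D T (subm psi psi')))
    & (forall T' : I * I * I -> {malg (dual k)[I]},
         inf_deformation D T T' -> exists psi, T' =1 Tpsi T psi)].
Proof.
case=> _ _ Hi Hii.
split.
- move=> psi; rewrite /inf_deformation /Z2; split.
  + case=> _ h1 h2; split; [exact/(part1i _ Hi) | exact/(part1ii _ Hii)].
  + case=> h1 h2; split.
    * by rewrite TpsiL modh_Lf.
    * exact/(part1i _ Hi).
    * exact/(part1ii _ Hii).
- move=> psi psi' _ _; split.
  + case=> g [Hg H2 H3].
    pose f := fun j => cmap (@dsnd k) (g j).
    have Eg : g = Lf (@idm k I) f.
      apply: functional_extensionality => j; rewrite LfE -(Hg j).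
      exact: Lm_decomp.
    rewrite Eg in H2 H3; rewrite TpsiL TpsiL in H3.
    exists (fun j => - f j).
    * apply: coder_opp; exact/equiv_cond2.
    * exact/equiv_cond3.
  + case=> f' Hc Hd; exists (Lf (@idm k I) (fun j => - f' j)); split.
    * by rewrite modh_Lf.
    * apply/equiv_cond2; exact: coder_opp.
    * rewrite TpsiL TpsiL; apply/equiv_cond3.
      have -> : (fun j => - - f' j) = f'.
        by apply: functional_extensionality => j; rewrite opprK.
      exact: Hd.
- move=> T' [HT _ _]; exists (fun x => cmap (@dsnd k) (T' x)) => x.
  rewrite TpsiL LfE -(HT x); exact: Lm_decomp.
Qed.
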